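(* Let $\Pi$ be a $3$-decomposable $30$-half-period with classes $A,B,C$. Then $N_{15}^{bi}(\Pi)=15$.
   Context: An allowable sequence on an $n$-element set is a doubly infinite sequence of permutations of the set (lists on positions $1,\dots,n$) in which consecutive permutations differ by swapping two adjacent elements (a transposition) and $\pi_{i+\binom n2}$ is the reverse of $\pi_i$; an $n$-half-period is a block $(\pi_0,\dots,\pi_{\binom n2})$ of consecutive permutations (each pair of elements is swapped exactly once in it). A transposition swapping the elements in positions $i,i+1$ is an $i$-transposition; for $1\le k\le n/2$ it is $k$-critical if it is a $k$-transposition or an $(n-k)$-transposition (for $n=30$, the $15$-critical transpositions are the $15$-transpositions). An $n$-half-period $\Pi$ ($3\mid n$) is $3$-decomposable if its elements can be labeled $A=\{a_1,\dots,a_{n/3}\}$, $B=\{b_1,\dots,b_{n/3}\}$, $C=\{c_1,\dots,c_{n/3}\}$ so that its first permutation is $(a_{n/3},\dots,a_1,b_1,\dots,b_{n/3},c_1,\dots,c_{n/3})$, every transposition between an element of $A$ and an element of $B$ occurs before every transposition between an element of $C$ and an element of $A\cup B$, and every transposition between $A$ and $C$ occurs before every transposition between $B$ and $C$. A transposition is bichromatic if its two elements lie in different classes among $A,B,C$. $N_k^{bi}(\Pi)$ is the number of bichromatic $k$-critical transpositions of $\Pi$. *)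

(* Defs.v *)
From mathcomp Require Import all_boot all_order all_algebra all_fingroup.
Set Implicit Arguments. Unset Strict Implicit. Unset Printing Implicit Defensive.

(* A permutation (list on positions)
   is pi : {perm 'I_n}, with pi p = element at (0-based) position p.
   Positions are 0-based here: the paper's i-transposition (swapping the
   1-based positions i, i+1) swaps 0-based positions j = i-1 and j+1. *)

Definition adj_swap (n : nat) (pi pi' : {perm 'I_n}) (j : nat) : bool :=
  (j.+1 < n) &&
  [forall p : 'I_n, [forall q : 'I_n,
     ((val p == j) && (val q == j.+1)) ==> ((pi' p == pi q) && (pi' q == pi p))]] &&
  [forall p : 'I_n, ((val p != j) && (val p != j.+1)) ==> (pi' p == pi p)].

Definition allowable (n : nat) (f : int -> {perm 'I_n}) : Prop :=
  (forall t : int, exists j : nat, adj_swap (f t) (f (t + 1)%R) j) /\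
  (forall (t : int) (p : 'I_n), f (t + ('C(n, 2) : int))%R p = f t (rev_ord p)).

Definition half_period (n : nat) (Pi : nat -> {perm 'I_n}) : Prop :=
  exists f : int -> {perm 'I_n}, allowable f /\
  exists t0 : int, forall k : nat, k <= 'C(n, 2) -> Pi k = f (t0 + (k : int))%R.

Definition swaps (n : nat) (Pi : nat -> {perm 'I_n}) (s : nat) (x y : 'I_n) : Prop :=
  exists p q : 'I_n, val q = (val p).+1 /\ adj_swap (Pi s) (Pi s.+1) (val p) /\
    Pi s p = x /\ Pi s q = y.

Definition swaps_between (n : nat) (Pi : nat -> {perm 'I_n}) (s : nat)
    (X Y : {set 'I_n}) : Prop :=
  exists x y : 'I_n, swaps Pi s x y /\
    ((x \in X /\ y \in Y) \/ (x \in Y /\ y \in X)).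

(* 3-decomposability with classes A, B, C (labels 0-based: a_(i+1) = a i) *)
Definition three_decomposable (n : nat) (Pi : nat -> {perm 'I_n})
    (A B C : {set 'I_n}) : Prop :=
  half_period Pi /\ (3 %| n) /\
  let m := n %/ 3 in
  exists a b c : nat -> 'I_n,
    A = [set a (val i) | i : 'I_m] /\
    B = [set b (val i) | i : 'I_m] /\
    C = [set c (val i) | i : 'I_m] /\
    (forall p : 'I_n,
       Pi 0 p = (if val p < m then a (m - (val p).+1)
                 else if val p < 2 * m then b (val p - m)
                 else c (val p - 2 * m))) /\
    (forall s s' : nat, s < 'C(n, 2) -> s' < 'C(n, 2) ->
       swaps_between Pi s A B -> swaps_between Pi s' C (A :|: B) -> s < s') /\
    (forall s s' : nat, s < 'C(n, 2) -> s' < 'C(n, 2) ->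
       swaps_between Pi s A C -> swaps_between Pi s' B C -> s < s').

Definition bichromatic (n : nat) (A B C : {set 'I_n}) (x y : 'I_n) : bool :=
  ~~ [|| (x \in A) && (y \in A), (x \in B) && (y \in B) | (x \in C) && (y \in C)].

(* a swap at 0-based lower position j is an i-transposition with i = j+1;
   it is k-critical iff i = k or i = n - k *)
Definition critical (n k j : nat) : bool := (j.+1 == k) || (j.+1 == n - k).

Definition N_bi (n k : nat) (Pi : nat -> {perm 'I_n}) (A B C : {set 'I_n}) : nat :=
  #|[set s : 'I_('C(n, 2)) |
      [exists p : 'I_n, [exists q : 'I_n,
         [&& val q == (val p).+1, adj_swap (Pi s) (Pi s.+1) (val p),
             critical n k (val p) & bichromatic A B C (Pi s p) (Pi s q)]]]]|.

(* Main.v *)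
Require Import Defs.
From mathcomp Require Import all_boot all_order all_algebra all_fingroup.
From mathcomp Require Import zify.
Set Implicit Arguments. Unset Strict Implicit. Unset Printing Implicit Defensive.
Import GRing.Theory.

Lemma C30 : 'C(30,2) = 435. Proof. by []. Qed.

Lemma tperm_adj (pi pi' : {perm 'I_30}) (j : 'I_30) :
  j < 29 -> pi' = (tperm j (inord j.+1) * pi)%g -> adj_swap pi pi' j.
Proof.
move=> hj ->; have hj1 : nat_of_ord (inord j.+1 : 'I_30) = j.+1 by rewrite inordK //; lia.
apply/andP; split; first (apply/andP; split).
- lia.
- apply/forallP => p; apply/forallP => q; apply/implyP => /andP [/eqP hp /eqP hq].
  have -> : p = j by apply: val_inj.
  have -> : q = inord j.+1 by apply: val_inj => /=; rewrite hj1.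
  by rewrite !permM tpermL tpermR !eqxx.
- apply/forallP => p; apply/implyP => /andP [hp hq].
  rewrite permM tpermD //.
  + by rewrite eq_sym; apply: contra hp => /eqP ->.
  + by rewrite eq_sym; apply: contra hq => /eqP ->; rewrite /= hj1.
Qed.

Lemma adj_tperm (pi pi' : {perm 'I_30}) (j : nat) :
  adj_swap pi pi' j -> exists jo : 'I_30, val jo = j /\ jo < 29 /\
     pi' = (tperm jo (inord jo.+1) * pi)%g.
Proof.
move=> /andP [/andP [hj /forallP H1] /forallP H2].
have hjo : j < 30 by lia.
exists (Ordinal hjo); split => //; split => /=; first lia.
set jo := Ordinal hjo.
have hj1 : nat_of_ord (inord jo.+1 : 'I_30) = j.+1 by rewrite inordK //.
have hc : (val jo == j) && (val (inord jo.+1 : 'I_30) == j.+1).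
  by rewrite /= inordK ?eqxx.
have /andP [/eqP E1 /eqP E2] := implyP (forallP (H1 jo) (inord jo.+1)) hc.
apply/permP => p; rewrite permM.
case: tpermP => [->|->|/eqP hp /eqP hq] //.
apply/eqP; apply: (implyP (H2 p)); apply/andP; split.
+ by apply: contra hp => /eqP e; apply/eqP/val_inj.
+ by apply: contra hq => /eqP e; apply/eqP/val_inj => /=; rewrite hj1.
Qed.

Definition good (Pi : nat -> {perm 'I_30}) :=
  (forall s, s < 435 -> exists j : 'I_30, j < 29 /\ Pi s.+1 = (tperm j (inord j.+1) * Pi s)%g)
  /\ (forall p, Pi 435 p = Pi 0 (rev_ord p)).

Lemma half_good (Pi : nat -> {perm 'I_30}) : half_period Pi -> good Pi.
Proof.
move=> [f [[Hs Hr] [t0 Hf]]]; split.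
- move=> s hs.
  have e1 := Hf s (ltnW (leq_trans hs (leqnn _))).
  have e2 := Hf s.+1 hs.
  have [j hj] := Hs (t0 + s%:Z)%R.
  have [jo [_ [h1 h2]]] := adj_tperm hj.
  exists jo; split => //.
  rewrite e1 e2 -h2; congr f.
  by rewrite -addrA -PoszD addn1.
- move=> p.
  have e1 := Hf 435 (leqnn _).
  have e0 := Hf 0 (leq0n _).
  rewrite e1 e0 addr0 -Hr C30 //.
Qed.
Implicit Types (Pi : nat -> {perm 'I_30}).

Definition jf (Pi : nat -> {perm 'I_30}) (s : nat) : 'I_30 :=
  odflt ord0 [pick j : 'I_30 | (j < 29) && (Pi s.+1 == (tperm j (inord j.+1) * Pi s)%g)].
Definition j1f Pi s : 'I_30 := inord (jf Pi s).+1.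
Definition pos (Pi : nat -> {perm 'I_30}) s (e : 'I_30) : 'I_30 := (Pi s)^-1%g e.
Definition xs Pi s := Pi s (jf Pi s).
Definition ys Pi s := Pi s (j1f Pi s).

Lemma jf_spec Pi s : good Pi -> s < 435 ->
  jf Pi s < 29 /\ Pi s.+1 = (tperm (jf Pi s) (j1f Pi s) * Pi s)%g.
Proof.
move=> [hs _] h; rewrite /j1f /jf; case: pickP => [j /andP [h1 /eqP h2] //|].
have [j [h1 h2]] := hs s h => /(_ j); by rewrite h1 h2 eqxx.
Qed.

Lemma j1fE Pi s : good Pi -> s < 435 -> nat_of_ord (j1f Pi s) = (jf Pi s).+1.
Proof. move=> hg hs; have [h _] := jf_spec hg hs; rewrite /j1f inordK //; lia. Qed.

Lemma posK Pi s e : Pi s (pos Pi s e) = e.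
Proof. by rewrite /pos permKV. Qed.
Lemma posE Pi s p : pos Pi s (Pi s p) = p.
Proof. by rewrite /pos permK. Qed.
Lemma pos_inj Pi s : injective (pos Pi s).
Proof. exact: perm_inj. Qed.
Lemma pos_eq Pi s e k : (pos Pi s e == k) = (e == Pi s k).
Proof. by rewrite -(inj_eq (@perm_inj _ (Pi s))) posK. Qed.

Lemma pos_step Pi s e : good Pi -> s < 435 ->
  pos Pi s.+1 e = tperm (jf Pi s) (j1f Pi s) (pos Pi s e).
Proof.
move=> hg hs; have [_ h] := jf_spec hg hs.
apply: (@perm_inj _ (Pi s.+1)); rewrite posK h permM tpermK posK //.
Qed.

Lemma xs_pos Pi s : pos Pi s (xs Pi s) = jf Pi s.
Proof. exact: posE. Qed.
Lemma ys_pos Pi s : pos Pi s (ys Pi s) = j1f Pi s.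
Proof. exact: posE. Qed.

Lemma xs_ys Pi s : good Pi -> s < 435 -> xs Pi s != ys Pi s.
Proof.
move=> hg hs; rewrite /xs /ys (inj_eq (@perm_inj _ _)).
apply/eqP => /(congr1 (@nat_of_ord _)); rewrite j1fE //; lia.
Qed.

Lemma tperm_val (j j1 u : 'I_30) : nat_of_ord (tperm j j1 u) =
  if nat_of_ord u == j then nat_of_ord j1 else if nat_of_ord u == j1 then nat_of_ord j
  else nat_of_ord u.
Proof.
case: tpermP => [->|->|h1 h2]; rewrite ?eqxx //.
- by case: eqP => // ->.
- have /negbTE -> : nat_of_ord u != j by apply/eqP => e; apply h1, val_inj.
  have /negbTE -> : nat_of_ord u != j1 by apply/eqP => e; apply h2, val_inj.
  by [].
Qed.

Lemma tperm_lt (j j1 u v : 'I_30) : nat_of_ord j1 = j.+1 -> u != v ->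
  ~~ ((u == j) && (v == j1)) -> ~~ ((u == j1) && (v == j)) ->
  (tperm j j1 u < tperm j j1 v) = (u < v).
Proof.
move=> hj huv h1 h2.
have nv : forall a b : 'I_30, (a == b) = (nat_of_ord a == nat_of_ord b) by [].
move: huv h1 h2; rewrite !nv !tperm_val hj.
do ![case: eqP => ? /=]; lia.
Qed.

Lemma rol Pi s u v : good Pi -> s < 435 ->
  ~~ ((u == xs Pi s) && (v == ys Pi s)) -> ~~ ((u == ys Pi s) && (v == xs Pi s)) ->
  (pos Pi s.+1 v < pos Pi s.+1 u) = (pos Pi s v < pos Pi s u).
Proof.
move=> hg hs h1 h2.
have [->|huv] := eqVneq u v; first by rewrite !ltnn.
rewrite !pos_step //; apply: tperm_lt; first exact: j1fE.
- by rewrite (inj_eq (@pos_inj _ _)) eq_sym.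
- by rewrite !pos_eq andbC.
- by rewrite !pos_eq andbC.
Qed.

Lemma pos1_xs Pi s : good Pi -> s < 435 -> pos Pi s.+1 (xs Pi s) = j1f Pi s.
Proof. by move=> hg hs; rewrite pos_step // xs_pos tpermL. Qed.
Lemma pos1_ys Pi s : good Pi -> s < 435 -> pos Pi s.+1 (ys Pi s) = jf Pi s.
Proof. by move=> hg hs; rewrite pos_step // ys_pos tpermR. Qed.

Lemma sum_ind (T : finType) (b : bool) (x : T) : \sum_(e : T) (b && (e == x)) = b.
Proof.
rewrite (bigD1 x) //= eqxx andbT big1 ?addn0 // => e /negbTE ->; by rewrite andbF.
Qed.

Definition inv Pi t := \sum_(pr : 'I_30 * 'I_30)
  ((pos Pi 0 pr.1 < pos Pi 0 pr.2) && (pos Pi t pr.2 < pos Pi t pr.1)).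

Lemma inv_step Pi s : good Pi -> s < 435 -> inv Pi s.+1 <= inv Pi s + 1.
Proof.
move=> hg hs; rewrite /inv -[X in _ <= _ + X](sum_ind true (xs Pi s, ys Pi s)) -big_split.
apply: leq_sum => [[u v]] _ /=.
have hJ := j1fE hg hs.
case: (eqVneq (u, v) (xs Pi s, ys Pi s)) => [[-> ->]|ne].
  by case: (_ && _); case: (_ && _).
case: (eqVneq (u, v) (ys Pi s, xs Pi s)) => [[-> ->]|ne2].
  rewrite pos1_xs // pos1_ys //; have -> : (j1f Pi s < jf Pi s) = false.
    by apply/negbTE; rewrite -leqNgt hJ; lia.
  by rewrite andbF.
have c1 : ~~ ((u == xs Pi s) && (v == ys Pi s)) by apply: contra ne => /andP [/eqP -> /eqP ->].
have c2 : ~~ ((u == ys Pi s) && (v == xs Pi s)) by apply: contra ne2 => /andP [/eqP -> /eqP ->].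
by rewrite rol // addn0.
Qed.

Lemma inv_bad Pi s : good Pi -> s < 435 -> pos Pi 0 (ys Pi s) < pos Pi 0 (xs Pi s) ->
  inv Pi s.+1 + 1 <= inv Pi s.
Proof.
move=> hg hs hb; rewrite /inv -[X in _ + X <= _](sum_ind true (ys Pi s, xs Pi s)) -big_split.
apply: leq_sum => [[u v]] _ /=.
have hJ := j1fE hg hs.
case: (eqVneq (u, v) (ys Pi s, xs Pi s)) => [[-> ->]|ne].
  rewrite pos1_xs // pos1_ys // xs_pos ys_pos hb hJ /=; lia.
case: (eqVneq (u, v) (xs Pi s, ys Pi s)) => [[-> ->]|ne2].
  by rewrite ltnNge (ltnW hb).
have c1 : ~~ ((u == xs Pi s) && (v == ys Pi s)) by apply: contra ne2 => /andP [/eqP -> /eqP ->].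
have c2 : ~~ ((u == ys Pi s) && (v == xs Pi s)) by apply: contra ne => /andP [/eqP -> /eqP ->].
by rewrite rol // addn0.
Qed.

Lemma sum_perm (sg : {perm 'I_30}) (F : 'I_30 -> nat) :
  \sum_(e : 'I_30) F (sg e) = \sum_(p : 'I_30) F p.
Proof. by rewrite [RHS](reindex_inj (@perm_inj _ sg)). Qed.

Lemma pos435 Pi e : good Pi -> pos Pi 435 e = rev_ord (pos Pi 0 e).
Proof.
move=> [_ hr]; apply: (@perm_inj _ (Pi 435)); rewrite posK hr.
by rewrite rev_ordK posK.
Qed.

Lemma inv0 Pi : inv Pi 0 = 0.
Proof. by rewrite /inv big1 // => pr _; lia. Qed.

Lemma c435 : \sum_(p : 'I_30) \sum_(q : 'I_30) (p < q) = 435.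
Proof. rewrite -(big_mkord xpredT (fun p => \sum_(q : 'I_30) (p < q))).
 under eq_bigr do rewrite -(big_mkord xpredT (fun q => ((_ < q) : nat))).
 by rewrite unlock. Qed.

Lemma inv435 Pi : good Pi -> inv Pi 435 = 435.
Proof.
move=> hg; rewrite /inv -[RHS]c435 pair_bigA /=.
have hinj : injective (fun pr : 'I_30 * 'I_30 => (Pi 0 pr.1, Pi 0 pr.2)).
  by move=> [a b] [c d] /= [/perm_inj -> /perm_inj ->].
rewrite (reindex_inj hinj); apply: eq_bigr => [[u v]] _ /=.
rewrite !pos435 // !posE /=.
have := ltn_ord u; have := ltn_ord v.
move: (nat_of_ord u) (nat_of_ord v) => a b; lia.
Qed.

Lemma inv_le Pi t : good Pi -> t <= 435 -> inv Pi t <= t.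
Proof.
move=> hg; elim: t => [|t IH] ht; first by rewrite inv0.
have := inv_step hg ht; have := IH (ltnW ht); lia.
Qed.

Lemma inv_mono Pi u d : good Pi -> u + d <= 435 -> inv Pi (u + d) <= inv Pi u + d.
Proof.
move=> hg; elim: d => [|d IH] h; first by rewrite !addn0.
have h2 : u + d < 435 by rewrite -addnS.
rewrite addnS; have := inv_step hg h2; have := IH (ltnW h2); lia.
Qed.

Lemma dir Pi s : good Pi -> s < 435 -> pos Pi 0 (xs Pi s) < pos Pi 0 (ys Pi s).
Proof.
move=> hg hs; rewrite ltnNge leq_eqVlt negb_or; apply/andP; split.
  apply/negP => /eqP /val_inj /pos_inj e; move: (xs_ys hg hs); by rewrite e eqxx.
apply/negP => hb.
have h1 := inv_bad hg hs hb; have h2 := inv_le hg (ltnW hs).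
have h3 : s.+1 + (435 - s.+1) <= 435 by lia.
have := inv_mono hg h3; rewrite subnKC // inv435 //; lia.
Qed.

Lemma ordU Pi x y : good Pi -> pos Pi 0 x < pos Pi 0 y -> forall t, t <= 435 ->
  (pos Pi t y < pos Pi t x) <-> exists s, s < t /\ x = xs Pi s /\ y = ys Pi s.
Proof.
move=> hg hxy; elim => [|t IH] ht.
  split; first lia. by move=> [s [hs _]].
have hts : t < 435 by [].
case E1: ((x == xs Pi t) && (y == ys Pi t)).
  move/andP: E1 => [/eqP ex /eqP ey]; rewrite ex ey pos1_xs // pos1_ys // j1fE //.
  split=> _; [by exists t | by []].
case E2: ((x == ys Pi t) && (y == xs Pi t)).
  move/andP: E2 => [/eqP ex /eqP ey]; have := dir hg hts; rewrite -ex -ey; lia.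
rewrite rol ?E1 ?E2 // IH ?(ltnW ht) //; split.
  by move=> [s [hs h]]; exists s; split => //; lia.
move=> [s [hs [ex ey]]]; exists s; split => //.
rewrite ltnS leq_eqVlt in hs; case/orP: hs => [/eqP es|//].
by move: E1; rewrite ex ey es !eqxx.
Qed.

Lemma ordE Pi x y : good Pi -> pos Pi 0 x < pos Pi 0 y ->
  exists s, s < 435 /\ x = xs Pi s /\ y = ys Pi s.
Proof.
move=> hg hxy; apply/(ordU hg hxy (leqnn _)).
rewrite !pos435 //=; have := ltn_ord (pos Pi 0 x); have := ltn_ord (pos Pi 0 y); lia.
Qed.

Definition LX Pi (P : 'I_30 -> bool) t := \sum_(e : 'I_30) (P e && (pos Pi t e < 15)).
Definition mid Pi s := (nat_of_ord (jf Pi s) == 14).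

Lemma LX_step Pi P s : good Pi -> s < 435 ->
  LX Pi P s.+1 + (mid Pi s && P (xs Pi s)) = LX Pi P s + (mid Pi s && P (ys Pi s)).
Proof.
move=> hg hs; rewrite /LX.
rewrite -[X in _ + X = _](sum_ind (mid Pi s && P (xs Pi s)) (xs Pi s)).
rewrite -[X in _ = _ + X](sum_ind (mid Pi s && P (ys Pi s)) (ys Pi s)) -!big_split.
apply: eq_bigr => e _ /=.
have hJ := j1fE hg hs; have hne := xs_ys hg hs.
have [ex|nx] := eqVneq e (xs Pi s).
  rewrite ex pos1_xs // xs_pos hJ (negbTE hne) /mid.
  by case: (P _); rewrite /= ?andbF /=; lia.
have [ey|ny] := eqVneq e (ys Pi s).
  rewrite ey pos1_ys // ys_pos hJ /mid.
  by case: (P _); rewrite /= ?andbF /=; lia.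
rewrite pos_step // tpermD ?andbF ?addn0 //.
- by rewrite eq_sym pos_eq.
- by rewrite eq_sym pos_eq.
Qed.

Lemma LX_tele Pi P t : good Pi -> t <= 435 ->
  LX Pi P 0 + \sum_(0 <= s < t) (mid Pi s && P (ys Pi s)) =
  LX Pi P t + \sum_(0 <= s < t) (mid Pi s && P (xs Pi s)).
Proof.
move=> hg; elim: t => [|t IH] ht; first by rewrite !big_geq.
rewrite !big_nat_recr //=; have := LX_step P hg ht; have := IH (ltnW ht); lia.
Qed.

Lemma LX_0 Pi (Q : nat -> bool) :
  LX Pi (fun e => Q (pos Pi 0 e)) 0 = \sum_(p : 'I_30) (Q p && (p < 15)).
Proof. exact: (sum_perm (Pi 0)^-1%g (fun p : 'I_30 => Q p && (p < 15))). Qed.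

Lemma LX_435 Pi (Q : nat -> bool) : good Pi ->
  LX Pi (fun e => Q (pos Pi 0 e)) 435 = \sum_(p : 'I_30) (Q p && (29 - p < 15)).
Proof.
move=> hg; rewrite /LX; under eq_bigr => e _ do rewrite pos435 //=.
exact: (sum_perm (Pi 0)^-1%g (fun p : 'I_30 => Q p && (29 - p < 15))).
Qed.

Lemma LA0 Pi : LX Pi (fun e => pos Pi 0 e < 10) 0 = 10.
Proof.
rewrite (LX_0 Pi (fun p => p < 10)).
rewrite -(big_mkord xpredT (fun p => ((p < 10) && (p < 15) : nat))).
by rewrite unlock.
Qed.
Lemma LC0 Pi : LX Pi (fun e => 20 <= pos Pi 0 e) 0 = 0.
Proof.
rewrite (LX_0 Pi (fun p => 20 <= p)).
rewrite -(big_mkord xpredT (fun p => ((20 <= p) && (p < 15) : nat))).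
by rewrite unlock.
Qed.
Lemma LC435 Pi : good Pi -> LX Pi (fun e => 20 <= pos Pi 0 e) 435 = 10.
Proof.
move=> hg; rewrite (LX_435 (fun p => 20 <= p) hg).
rewrite -(big_mkord xpredT (fun p => ((20 <= p) && (29 - p < 15) : nat))).
by rewrite unlock.
Qed.

Lemma decomp_facts Pi A B C : three_decomposable Pi A B C ->
  good Pi /\
  (forall e, (e \in A) = (pos Pi 0 e < 10)) /\
  (forall e, (e \in B) = (10 <= pos Pi 0 e < 20)) /\
  (forall e, (e \in C) = (20 <= pos Pi 0 e)) /\
  (forall s s', s < 435 -> s' < 435 -> swaps_between Pi s A B ->
     swaps_between Pi s' C (A :|: B) -> s < s').
Proof.
move=> [hp [_ H]]; move: H => /= [a [b [c [HA [HB [HC [H0 [Hph _]]]]]]]].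
have hg := half_good hp.
split => //.
have m10 : 30 %/ 3 = 10 by [].
have Ea : forall k, k < 10 -> Pi 0 (inord (9 - k)) = a k.
  move=> k hk; rewrite H0 inordK; last lia.
  rewrite m10; case: ifP => h1; last lia.
  have -> : 10 - (9 - k).+1 = k by lia. by [].
have Eb : forall k, k < 10 -> Pi 0 (inord (10 + k)) = b k.
  move=> k hk; rewrite H0 inordK; last lia.
  rewrite m10; case: ifP => h1; last lia.
  have -> : 10 + k - 10 = k by lia. by [].
have Ec : forall k, k < 10 -> Pi 0 (inord (20 + k)) = c k.
  move=> k hk; rewrite H0 inordK; last lia.
  rewrite m10 (_ : 20 + k < 10 = false); last by apply/negbTE; lia.
  rewrite (_ : 20 + k < 2 * 10 = false); last by apply/negbTE; lia.
  have -> : 20 + k - 2 * 10 = k by lia. by [].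
split; [|split; [|split]].
- move=> e; rewrite HA; apply/imsetP/idP.
  + move=> [i _ ->]; have hi : nat_of_ord i < 10 := ltn_ord i.
    by rewrite -Ea // posE inordK; lia.
  + move=> h; have hi : 9 - pos Pi 0 e < 30 %/ 3 by rewrite m10; lia.
    exists (Ordinal hi) => //=; rewrite -Ea; last lia.
    rewrite -{1}(posK Pi 0 e); congr (Pi 0 _); apply: val_inj; rewrite /= inordK; lia.
- move=> e; rewrite HB; apply/imsetP/idP.
  + move=> [i _ ->]; have hi : nat_of_ord i < 10 := ltn_ord i.
    by rewrite -Eb // posE inordK; lia.
  + move=> h; have hi : pos Pi 0 e - 10 < 30 %/ 3 by rewrite m10; lia.
    exists (Ordinal hi) => //=; rewrite -Eb; last lia.
    rewrite -{1}(posK Pi 0 e); congr (Pi 0 _); apply: val_inj; rewrite /= inordK; lia.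
- move=> e; rewrite HC; apply/imsetP/idP.
  + move=> [i _ ->]; have hi : nat_of_ord i < 10 := ltn_ord i.
    by rewrite -Ec // posE inordK; lia.
  + move=> h; have := ltn_ord (pos Pi 0 e) => h'.
    have hi : pos Pi 0 e - 20 < 30 %/ 3 by rewrite m10; lia.
    exists (Ordinal hi) => //=; rewrite -Ec; last lia.
    rewrite -{1}(posK Pi 0 e); congr (Pi 0 _); apply: val_inj; rewrite /= inordK; lia.
- by move: Hph; rewrite C30.
Qed.

Lemma swaps_xsys Pi s : good Pi -> s < 435 -> swaps Pi s (xs Pi s) (ys Pi s).
Proof.
move=> hg hs; have [h1 h2] := jf_spec hg hs.
exists (jf Pi s), (j1f Pi s); split; first exact: j1fE.
split => //; exact: tperm_adj.
Qed.

Lemma tperm_uniq (j k : 'I_30) : j < 29 -> k < 29 ->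
  tperm j (inord j.+1) = tperm k (inord k.+1) -> j = k.
Proof.
move=> hj hk h; have := congr1 (fun f : {perm 'I_30} => f j) h; rewrite /= tpermL.
have e1 : nat_of_ord (inord j.+1 : 'I_30) = j.+1 by rewrite inordK //; lia.
have e2 : nat_of_ord (inord k.+1 : 'I_30) = k.+1 by rewrite inordK //; lia.
case: tpermP => [->//|ej|nj nk] /(congr1 (@nat_of_ord _)).
- move: ej => /(congr1 (@nat_of_ord _)); rewrite e1 e2; lia.
- by rewrite e1; lia.
Qed.

Lemma sum_lt_nat n k : \sum_(0 <= p < n) (p < k) = minn n k.
Proof.
elim: n => [|n IH]; first by rewrite big_geq // min0n.
rewrite big_nat_recr //= IH; lia.
Qed.

Lemma rank Pi t e : nat_of_ord (pos Pi t e) = \sum_(e' : 'I_30) (pos Pi t e' < pos Pi t e).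
Proof.
rewrite (sum_perm (Pi t)^-1%g (fun p : 'I_30 => p < pos Pi t e)).
rewrite -(big_mkord xpredT (fun p => (p < pos Pi t e : nat))) sum_lt_nat.
have := ltn_ord (pos Pi t e); lia.
Qed.

Lemma cntB Pi : \sum_(e : 'I_30) (10 <= pos Pi 0 e < 20) = 10.
Proof.
rewrite (sum_perm (Pi 0)^-1%g (fun p : 'I_30 => 10 <= p < 20)).
rewrite -(big_mkord xpredT (fun p => (10 <= p < 20 : nat))). by rewrite unlock.
Qed.
Lemma cntAB Pi : \sum_(e : 'I_30) (pos Pi 0 e < 20) = 20.
Proof.
rewrite (sum_perm (Pi 0)^-1%g (fun p : 'I_30 => p < 20)).
rewrite -(big_mkord xpredT (fun p => (p < 20 : nat))). by rewrite unlock.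
Qed.

Definition bic Pi s := ~~ [|| (pos Pi 0 (xs Pi s) < 10) && (pos Pi 0 (ys Pi s) < 10),
   (10 <= pos Pi 0 (xs Pi s) < 20) && (10 <= pos Pi 0 (ys Pi s) < 20)
 | (20 <= pos Pi 0 (xs Pi s)) && (20 <= pos Pi 0 (ys Pi s))].

Lemma Nbi_eq Pi (A B C : {set 'I_30}) : good Pi ->
  (forall e, (e \in A) = (pos Pi 0 e < 10)) ->
  (forall e, (e \in B) = (10 <= pos Pi 0 e < 20)) ->
  (forall e, (e \in C) = (20 <= pos Pi 0 e)) ->
  N_bi 15 Pi A B C = \sum_(0 <= s < 435) (mid Pi s && bic Pi s).
Proof.
move=> hg mA mB mC; rewrite /N_bi -sum1_card big_mkcond /=.
have -> : 435 = 'C(30, 2) by [].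
rewrite big_mkord; apply: eq_bigr => i _; rewrite inE.
have hs : nat_of_ord i < 435 := ltn_ord i.
suff -> : [exists p : 'I_30, [exists q : 'I_30,
         [&& nat_of_ord q == (nat_of_ord p).+1, adj_swap (Pi i) (Pi i.+1) p,
             critical 30 15 p & bichromatic A B C (Pi i p) (Pi i q)]]] =
          mid Pi i && bic Pi i by case: (_ && _).
have [hj hP] := jf_spec hg hs.
apply/existsP/idP.
- move=> [p /existsP [q /and4P [/eqP hq hadj hcrit hbi]]].
  have [jo [ejo [hjo hP']]] := adj_tperm hadj.
  have ej : jo = jf Pi i.
    apply: tperm_uniq => //; apply: (mulIg (Pi i)); by rewrite /= -hP -hP'.
  have ep : p = jf Pi i by apply: val_inj; rewrite /= -ejo ej.
  have eq : q = j1f Pi i by apply: val_inj; rewrite /= hq j1fE // ep.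
  move: hcrit hbi; rewrite ep eq /critical /bichromatic !mA !mB !mC /mid /bic /xs /ys.
  move=> hc ->; rewrite andbT; apply/eqP; move: hc; lia.
- move=> /andP [hm hb]; exists (jf Pi i); apply/existsP; exists (j1f Pi i).
  apply/and4P; split.
  + by rewrite j1fE.
  + exact: tperm_adj.
  + by rewrite /critical; move: hm; rewrite /mid; lia.
  + by rewrite /bichromatic !mA !mB !mC.
Qed.

Theorem lemma1 (Pi : nat -> {perm 'I_30}) (A B C : {set 'I_30}) :
  three_decomposable Pi A B C -> N_bi 15 Pi A B C = 15.
Proof.
move=> H; have [hg [mA [mB [mC Hph]]]] := decomp_facts H.
rewrite (Nbi_eq hg mA mB mC).
pose CAB s := [&& s < 435, pos Pi 0 (xs Pi s) < 20 & 20 <= pos Pi 0 (ys Pi s)].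
have exC : exists s, CAB s.
  have h : pos Pi 0 (Pi 0 ord0) < pos Pi 0 (Pi 0 ord_max) by rewrite  !posE.
  have [s [hs [ex ey]]] := ordE hg h.
  exists s; rewrite /CAB hs -ex -ey  !posE //.
have [ts hts hmin] := ex_minnP exC.
move/and3P: hts => [tsl hx hy].
have Hcab : swaps_between Pi ts C (A :|: B).
  exists (xs Pi ts), (ys Pi ts); split; first exact: swaps_xsys.
  by right; rewrite in_setU mA mB mC; split => //; apply/orP; lia.
have noAB : forall s, ts <= s -> s < 435 ->
    ~~ ((pos Pi 0 (xs Pi s) < 10) && (10 <= pos Pi 0 (ys Pi s) < 20)).
  move=> s h1 h2; apply/negP => /andP [ha hb].
  have : s < ts.
    apply: Hph => //; exists (xs Pi s), (ys Pi s); split; first exact: swaps_xsys.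
    by left; rewrite mA mB.
  lia.
have noCAB : forall s, s < ts -> ~~ ((pos Pi 0 (xs Pi s) < 20) && (20 <= pos Pi 0 (ys Pi s))).
  move=> s h1; apply/negP => /andP [ha hb].
  have : ts <= s by apply: hmin; rewrite /CAB ha hb andbT; lia.
  lia.
have ordAB : forall x y, pos Pi 0 x < 10 -> 10 <= pos Pi 0 y < 20 -> pos Pi ts y < pos Pi ts x.
  move=> x y hx1 hy1; have hxy : pos Pi 0 x < pos Pi 0 y by lia.
  apply/(ordU hg hxy (ltnW tsl)).
  have [s [hs [ex ey]]] := ordE hg hxy.
  exists s; split => //; apply: Hph => //.
  exists (xs Pi s), (ys Pi s); split; first exact: swaps_xsys.
  by left; rewrite mA mB -ex -ey.
have ordC : forall u c, pos Pi 0 u < 20 -> 20 <= pos Pi 0 c -> pos Pi ts u < pos Pi ts c.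
  move=> u c hu hc; have huc : pos Pi 0 u < pos Pi 0 c by lia.
  rewrite ltnNge leq_eqVlt negb_or; apply/andP; split.
    apply/negP => /eqP /val_inj /pos_inj e; move: huc; rewrite e; lia.
  apply/negP => /(ordU hg huc (ltnW tsl)) [s [hs [ex ey]]].
  have := noCAB s hs; rewrite -ex -ey hu hc //.
have posA : forall e, pos Pi 0 e < 10 -> 10 <= pos Pi ts e < 20.
  move=> e he; apply/andP; split.
    rewrite rank -[X in X <= _](cntB Pi) leq_sum // => e' _.
    case: (boolP (10 <= pos Pi 0 e' < 20)) => h //; by rewrite ordAB.
  have : \sum_(e' : 'I_30) (pos Pi ts e' < pos Pi ts e) +
         \sum_(e' : 'I_30) (true && (e' == e)) <= 20.
    rewrite -big_split -[X in _ <= X](cntAB Pi) /= leq_sum // => e' _.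
    have [->|ne] := eqVneq e' e; first by rewrite ltnn /=; move: he; lia.
    rewrite addn0; case: (ltnP (pos Pi 0 e') 20) => h; first by rewrite leq_b1.
    have := ordC e e' (leq_trans he (isT : 10 <= 20)) h; lia.
  by rewrite sum_ind -rank; lia.
have posB : forall e, 10 <= pos Pi 0 e < 20 -> pos Pi ts e < 10.
  move=> e he.
  have : \sum_(e' : 'I_30) (pos Pi ts e' < pos Pi ts e) +
         \sum_(e' : 'I_30) (true && (e' == e)) <= 10.
    rewrite -big_split -[X in _ <= X](cntB Pi) /= leq_sum // => e' _.
    have [->|ne] := eqVneq e' e; first by rewrite ltnn /=; move: he; lia.
    rewrite addn0; case: (ltnP (pos Pi 0 e') 10) => h.
      have := ordAB e' e h he; lia.
    case: (ltnP (pos Pi 0 e') 20) => h2; first by rewrite /= leq_b1.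
    have : pos Pi 0 e < 20 by case/andP: he.
    move=> he2; have := ordC e e' he2 h2; lia.
  by rewrite sum_ind -rank; lia.
have posC : forall e, 20 <= pos Pi 0 e -> 20 <= pos Pi ts e.
  move=> e he; rewrite rank -[X in X <= _](cntAB Pi) leq_sum // => e' _.
  case: (ltnP (pos Pi 0 e') 20) => h //; by rewrite ordC.
have Akey : forall p : 'I_30, (pos Pi 0 (Pi ts p) < 10) = (10 <= p < 20).
  move=> p; have := posE Pi ts p => ep.
  case: (ltnP (pos Pi 0 (Pi ts p)) 10) => h1.
    by have := posA _ h1; rewrite ep.
  case: (ltnP (pos Pi 0 (Pi ts p)) 20) => h2.
    have := posB (Pi ts p); rewrite h1 h2 ep => /(_ isT); lia.
  have := posC _ h2; rewrite ep; lia.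
have LAts : LX Pi (fun e => pos Pi 0 e < 10) ts = 5.
  transitivity (\sum_(e : 'I_30) (fun p : 'I_30 => ((pos Pi 0 (Pi ts p) < 10) && (p < 15) : nat))
     ((Pi ts)^-1%g e)).
    by apply: eq_bigr => e _; rewrite /= permKV.
  rewrite (sum_perm (Pi ts)^-1%g (fun p : 'I_30 => ((pos Pi 0 (Pi ts p) < 10) && (p < 15) : nat))).
  under eq_bigr => p _ do rewrite Akey.
  rewrite -(big_mkord xpredT (fun p => ((10 <= p < 20) && (p < 15) : nat))).
  by rewrite unlock.
pose mAB s := mid Pi s && (pos Pi 0 (xs Pi s) < 10) && (10 <= pos Pi 0 (ys Pi s) < 20).
pose mAC s := mid Pi s && (pos Pi 0 (xs Pi s) < 10) && (20 <= pos Pi 0 (ys Pi s)).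
pose mBC s := mid Pi s && (10 <= pos Pi 0 (xs Pi s) < 20) && (20 <= pos Pi 0 (ys Pi s)).
have P1 : forall t, t <= 435 -> \sum_(0 <= s < t) (mid Pi s && (pos Pi 0 (xs Pi s) < 10)) =
   \sum_(0 <= s < t) (mid Pi s && (pos Pi 0 (ys Pi s) < 10)) + \sum_(0 <= s < t) mAB s
   + \sum_(0 <= s < t) mAC s.
  move=> t ht; rewrite -!big_split; apply: eq_big_nat => s /andP [_ hs].
  have := dir hg (leq_trans hs ht); rewrite /mAB /mAC.
  by case: (mid Pi s) => /=; lia.
have P2 : \sum_(0 <= s < 435) (mid Pi s && (20 <= pos Pi 0 (ys Pi s))) =
   \sum_(0 <= s < 435) (mid Pi s && (20 <= pos Pi 0 (xs Pi s))) + \sum_(0 <= s < 435) mAC s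
   + \sum_(0 <= s < 435) mBC s.
  rewrite -!big_split; apply: eq_big_nat => s /andP [_ hs].
  have := dir hg hs; rewrite /mAC /mBC.
  by case: (mid Pi s) => /=; lia.
have PN : \sum_(0 <= s < 435) (mid Pi s && bic Pi s) =
   \sum_(0 <= s < 435) mAB s + \sum_(0 <= s < 435) mAC s + \sum_(0 <= s < 435) mBC s.
  rewrite -!big_split; apply: eq_big_nat => s /andP [_ hs].
  have := dir hg hs; rewrite /mAB /mAC /mBC /bic.
  by case: (mid Pi s) => /=; lia.
have TA := LX_tele (fun e => pos Pi 0 e < 10) hg (ltnW tsl).
have TC := LX_tele (fun e => 20 <= pos Pi 0 e) hg (leqnn 435).
rewrite /= in TA TC.
rewrite LA0 LAts P1 ?(ltnW tsl) // in TA.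
rewrite LC0 LC435 // P2 in TC.
have AC0 : \sum_(0 <= s < ts) mAC s = 0.
  rewrite big_nat big1 // => s /andP [_ hs]; have := noCAB s hs; rewrite /mAC.
  by case: (mid Pi s) => //=; lia.
have AB0 : \sum_(ts <= s < 435) mAB s = 0.
  rewrite big_nat big1 // => s /andP [h1 h2]; have := noAB s h1 h2; rewrite /mAB.
  by case: (mid Pi s) => //=; lia.
have ABs : \sum_(0 <= s < 435) mAB s = 5.
  rewrite (big_cat_nat (leq0n ts) (ltnW tsl)) /= AB0 addn0; lia.
rewrite PN ABs; lia.
Qed.
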